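(* Let $f\in\mathcal{F}_3$ and $\mathbf{x}\in[0,1]^3$. If $f(1,2)+f(1,3)+f(2,3)\ge1+f(1)+f(2)+f(3)$, there exists an optimal solution $\theta$ of the linear program defining $f^{++}(\mathbf{x})$ with $\theta(\{1,2,3\})\le x_1x_2x_3$ (hence $\theta$ is negatively cylinder dependent: $\sum_{S\supseteq T}\theta(S)\le\prod_{i\in T}x_i$ for all nonempty $T\subseteq[3]$). Otherwise, there exists an optimal solution $\theta$ with $\theta(\{1,2,3\})\ge x_1x_2x_3$ (positively cylinder dependent: $\sum_{S\supseteq T}\theta(S)\ge\prod_{i\in T}x_i$ for all nonempty $T\subseteq[3]$).
   Context: $[n]=\{1,\dots,n\}$. A set function $f:2^{[n]}\to\mathbb{R}_+$ is monotone if $f(S)\le f(T)$ for $S\subseteq T$, submodular if $f(S)+f(T)\ge f(S\cap T)+f(S\cup T)$. $\mathcal{F}_n$ is the set of monotone submodular $f:2^{[n]}\to\mathbb{R}_+$ with $f(\emptyset)=0$, $f([n])=1$. Write $f(i)=f(\{i\})$, $f(i,j)=f(\{i,j\})$. For $\mathbf{x}\in[0,1]^n$, $f^{++}(\mathbf{x})$ is the optimal value of the linear program: maximize $\sum_{S\subseteq[n]}\theta(S)f(S)$ over $\theta:2^{[n]}\to\mathbb{R}_{\ge0}$ with $\sum_S\theta(S)=1$, $\sum_{S\ni i}\theta(S)=x_i$ for all $i$, and $\sum_{S\ni i,j}\theta(S)=x_ix_j$ for all $i<j$. *)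

(* Defs.v *)
From HB Require Import structures.
From mathcomp Require Import all_boot all_order all_algebra.
From mathcomp Require Import reals.
Set Implicit Arguments. Unset Strict Implicit. Unset Printing Implicit Defensive.
Import Order.TTheory GRing.Theory Num.Theory.
Local Open Scope ring_scope.

(* Ground set [n] is represented by 'I_n = {0,...,n-1}; element k of the
   paper corresponds to ordinal k-1. *)

Definition monotone_set_fun (R : realType) (n : nat) (f : {set 'I_n} -> R) :=
  forall S T : {set 'I_n}, S \subset T -> f S <= f T.

Definition submodular_set_fun (R : realType) (n : nat) (f : {set 'I_n} -> R) :=
  forall S T : {set 'I_n}, f (S :&: T) + f (S :|: T) <= f S + f T.

Definition in_F (R : realType) (n : nat) (f : {set 'I_n} -> R) :=
  [/\ forall S, 0 <= f S, monotone_set_fun f, submodular_set_fun f,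
      f set0 = 0 & f setT = 1].

Definition lp_feasible (R : realType) (n : nat) (x : 'I_n -> R)
    (theta : {set 'I_n} -> R) :=
  [/\ forall S, 0 <= theta S,
      \sum_(S : {set 'I_n}) theta S = 1,
      forall i : 'I_n, \sum_(S : {set 'I_n} | i \in S) theta S = x i &
      forall i j : 'I_n, (i < j)%N ->
        \sum_(S : {set 'I_n} | (i \in S) && (j \in S)) theta S = x i * x j].

Definition lp_value (R : realType) (n : nat) (f : {set 'I_n} -> R)
    (theta : {set 'I_n} -> R) := \sum_(S : {set 'I_n}) theta S * f S.

Definition lp_optimal (R : realType) (n : nat) (f : {set 'I_n} -> R)
    (x : 'I_n -> R) (theta : {set 'I_n} -> R) :=
  lp_feasible x theta /\
  forall theta', lp_feasible x theta' -> lp_value f theta' <= lp_value f theta.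

Definition neg_cylinder_dep (R : realType) (n : nat) (x : 'I_n -> R)
    (theta : {set 'I_n} -> R) :=
  forall T : {set 'I_n}, T != set0 ->
    \sum_(S : {set 'I_n} | T \subset S) theta S <= \prod_(i in T) x i.

Definition pos_cylinder_dep (R : realType) (n : nat) (x : 'I_n -> R)
    (theta : {set 'I_n} -> R) :=
  forall T : {set 'I_n}, T != set0 ->
    \sum_(S : {set 'I_n} | T \subset S) theta S >= \prod_(i in T) x i.

Definition e1 : 'I_3 := @Ordinal 3 0 isT.
Definition e2 : 'I_3 := @Ordinal 3 1 isT.
Definition e3 : 'I_3 := @Ordinal 3 2 isT.

(* Main.v *)
Require Import Defs.
From HB Require Import structures.
From mathcomp Require Import all_boot all_order all_algebra.
From mathcomp Require Import reals.
From mathcomp Require Import ring lra.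
Import Order.TTheory GRing.Theory Num.Theory.
Local Open Scope ring_scope.

Lemma e12 : (e1 == e2) = false. Proof. by []. Qed.
Lemma e13 : (e1 == e3) = false. Proof. by []. Qed.
Lemma e23 : (e2 == e3) = false. Proof. by []. Qed.
Lemma e21 : (e2 == e1) = false. Proof. by []. Qed.
Lemma e31 : (e3 == e1) = false. Proof. by []. Qed.
Lemma e32 : (e3 == e2) = false. Proof. by []. Qed.
Definition eE := (e12, e13, e23, e21, e31, e32, eqxx, in_setT, in_set0, orbT, orbF, andbT, andbF).

Lemma ord3 (i : 'I_3) : i = e1 \/ i = e2 \/ i = e3.
Proof.
case: i => [[|[|[|m]]] Hm]; [left|right;left|right;right|]; try by apply/val_inj.
by [].
Qed.

Definition sets3 : seq {set 'I_3} :=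
  [:: set0; [set e1]; [set e2]; [set e3]; [set e1; e2]; [set e1; e3]; [set e2; e3]; setT].

Definition chi (S : {set 'I_3}) := (e1 \in S, e2 \in S, e3 \in S).

Lemma chi_inj : injective chi.
Proof.
move=> S T [h1 h2 h3]; apply/setP => i; case: (ord3 i) => [->|[->|->]] //.
Qed.

Lemma sets3_uniq : uniq sets3.
Proof.
rewrite -(map_inj_uniq chi_inj) /chi /= !inE !eE /=. by [].
Qed.

Lemma sets3_all S : S \in sets3.
Proof.
have: chi S \in map chi sets3.
  rewrite /chi /= !inE !eE /=.
  by case: (e1 \in S); case: (e2 \in S); case: (e3 \in S).
by rewrite (mem_map chi_inj).
Qed.

Lemma sum3 (R : realType) (F : {set 'I_3} -> R) :
  \sum_S F S = F set0 + F [set e1] + F [set e2] + F [set e3] + F [set e1; e2]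
    + F [set e1; e3] + F [set e2; e3] + F setT.
Proof.
have P : perm_eq (enum {set 'I_3}) sets3.
  apply: uniq_perm; [exact: enum_uniq | exact: sets3_uniq |].
  by move=> S; rewrite mem_enum sets3_all.
rewrite -big_enum /= (perm_big _ P) /= !big_cons big_nil.
by rewrite addr0 !addrA.
Qed.

Lemma prod3 (R : realType) (F : 'I_3 -> R) (T : {set 'I_3}) :
  \prod_(i in T) F i = (if e1 \in T then F e1 else 1) * (if e2 \in T then F e2 else 1)
    * (if e3 \in T then F e3 else 1).
Proof.
rewrite big_mkcond /=.
have P : perm_eq (enum 'I_3) [:: e1; e2; e3].
  apply: uniq_perm; [exact: enum_uniq | by [] |].
  by move=> i; rewrite mem_enum !inE; case: (ord3 i) => [->|[->|->]].
rewrite -big_enum /= (perm_big _ P) /= !big_cons big_nil.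
by rewrite mulr1 !mulrA.
Qed.

Lemma setT3 : [set: 'I_3] = [set e1; e2; e3].
Proof. by apply/setP => i; rewrite !inE; case: (ord3 i) => [->|[->|->]]; rewrite !eE. Qed.

Section S.
Variable R : realType.
Implicit Types (th : {set 'I_3} -> R) (x : 'I_3 -> R).

Ltac ev := rewrite ?big_mkcond ?sum3 /= ?inE ?eE /= ?add0r ?addr0.

Lemma marg1 th : \sum_(S : {set 'I_3} | e1 \in S) th S = th [set e1] + th [set e1; e2] + th [set e1; e3] + th setT.
Proof. by ev. Qed.
Lemma marg2 th : \sum_(S : {set 'I_3} | e2 \in S) th S = th [set e2] + th [set e1; e2] + th [set e2; e3] + th setT.
Proof. by ev. Qed.
Lemma marg3 th : \sum_(S : {set 'I_3} | e3 \in S) th S = th [set e3] + th [set e1; e3] + th [set e2; e3] + th setT.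
Proof. by ev. Qed.
Lemma pair12 th : \sum_(S : {set 'I_3} | (e1 \in S) && (e2 \in S)) th S = th [set e1; e2] + th setT.
Proof. by ev. Qed.
Lemma pair13 th : \sum_(S : {set 'I_3} | (e1 \in S) && (e3 \in S)) th S = th [set e1; e3] + th setT.
Proof. by ev. Qed.
Lemma pair23 th : \sum_(S : {set 'I_3} | (e2 \in S) && (e3 \in S)) th S = th [set e2; e3] + th setT.
Proof. by ev. Qed.

Lemma feasE x th : lp_feasible x th <->
  [/\ forall S, 0 <= th S,
   th set0 + th [set e1] + th [set e2] + th [set e3] + th [set e1; e2]
    + th [set e1; e3] + th [set e2; e3] + th setT = 1,
   [/\ th [set e1] + th [set e1; e2] + th [set e1; e3] + th setT = x e1,
       th [set e2] + th [set e1; e2] + th [set e2; e3] + th setT = x e2 &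
       th [set e3] + th [set e1; e3] + th [set e2; e3] + th setT = x e3] &
   [/\ th [set e1; e2] + th setT = x e1 * x e2,
       th [set e1; e3] + th setT = x e1 * x e3 &
       th [set e2; e3] + th setT = x e2 * x e3]].
Proof.
split.
  case=> h0 hs hm hp; split => //; first by rewrite -sum3.
    by split; [rewrite -marg1 | rewrite -marg2 | rewrite -marg3].
  by split; [rewrite -pair12 hp | rewrite -pair13 hp | rewrite -pair23 hp].
case=> h0 hs [m1 m2 m3] [p1 p2 p3]; split => //; first by rewrite sum3.
  by move=> i; case: (ord3 i) => [->|[->|->]]; rewrite ?marg1 ?marg2 ?marg3.
move=> i j; case: (ord3 i) => [->|[->|->]]; case: (ord3 j) => [->|[->|->]] //= _;
  by rewrite ?pair12 ?pair13 ?pair23.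
Qed.

Definition thf (a0 a1 a2 a3 a12 a13 a23 a123 : R) (S : {set 'I_3}) : R :=
  if e1 \in S then (if e2 \in S then (if e3 \in S then a123 else a12)
                    else (if e3 \in S then a13 else a1))
  else (if e2 \in S then (if e3 \in S then a23 else a2)
        else (if e3 \in S then a3 else a0)).

Definition U0 x := 1 - x e1 - x e2 - x e3 + x e1 * x e2 + x e1 * x e3 + x e2 * x e3.

Definition thx x t := thf (U0 x - t) (x e1 - x e1 * x e2 - x e1 * x e3 + t)
  (x e2 - x e1 * x e2 - x e2 * x e3 + t) (x e3 - x e1 * x e3 - x e2 * x e3 + t)
  (x e1 * x e2 - t) (x e1 * x e3 - t) (x e2 * x e3 - t) t.

Ltac evt := rewrite /thx /thf ?inE ?eE /=.

Lemma thx_setT x t : thx x t setT = t.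
Proof. by evt. Qed.

Lemma thx_feas x t : 0 <= t ->
  x e1 * x e2 + x e1 * x e3 - x e1 <= t ->
  x e1 * x e2 + x e2 * x e3 - x e2 <= t ->
  x e1 * x e3 + x e2 * x e3 - x e3 <= t ->
  t <= x e1 * x e2 -> t <= x e1 * x e3 -> t <= x e2 * x e3 -> t <= U0 x ->
  lp_feasible x (thx x t).
Proof.
move=> h1 h2 h3 h4 h5 h6 h7 h8; rewrite /U0 in h8; apply/feasE; split.
- move=> S; rewrite /thx /thf /U0.
  case: (e1 \in S); case: (e2 \in S); case: (e3 \in S); lra.
- evt; rewrite /U0; lra.
- split; evt; lra.
- split; evt; lra.
Qed.

Lemma feas_bounds x th : lp_feasible x th ->
  [/\ 0 <= th setT,
  x e1 * x e2 + x e1 * x e3 - x e1 <= th setT,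
  x e1 * x e2 + x e2 * x e3 - x e2 <= th setT,
  x e1 * x e3 + x e2 * x e3 - x e3 <= th setT &
  [/\ th setT <= x e1 * x e2, th setT <= x e1 * x e3, th setT <= x e2 * x e3 & th setT <= U0 x]].
Proof.
move/feasE=> [h0 hs [m1 m2 m3] [p1 p2 p3]].
have := h0 set0; have := h0 [set e1]; have := h0 [set e2]; have := h0 [set e3].
have := h0 [set e1; e2]; have := h0 [set e1; e3]; have := h0 [set e2; e3]; have := h0 setT.
rewrite /U0 => *; split; try lra; split; lra.
Qed.

Definition V (f : {set 'I_3} -> R) x t :=
  (U0 x - t) * f set0 + (x e1 - x e1 * x e2 - x e1 * x e3 + t) * f [set e1]
  + (x e2 - x e1 * x e2 - x e2 * x e3 + t) * f [set e2]
  + (x e3 - x e1 * x e3 - x e2 * x e3 + t) * f [set e3]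
  + (x e1 * x e2 - t) * f [set e1; e2] + (x e1 * x e3 - t) * f [set e1; e3]
  + (x e2 * x e3 - t) * f [set e2; e3] + t * f setT.

Lemma feas_value f x th : lp_feasible x th -> lp_value f th = V f x (th setT).
Proof.
move/feasE=> [h0 hs [m1 m2 m3] [p1 p2 p3]].
rewrite /lp_value sum3 /V /U0.
have -> : th [set e1; e2] = x e1 * x e2 - th setT by lra.
have -> : th [set e1; e3] = x e1 * x e3 - th setT by lra.
have -> : th [set e2; e3] = x e2 * x e3 - th setT by lra.
have -> : th [set e1] = x e1 - x e1 * x e2 - x e1 * x e3 + th setT by lra.
have -> : th [set e2] = x e2 - x e1 * x e2 - x e2 * x e3 + th setT by lra.
have -> : th [set e3] = x e3 - x e1 * x e3 - x e2 * x e3 + th setT by lra.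
have -> : th set0 = 1 - x e1 - x e2 - x e3 + x e1 * x e2 + x e1 * x e3 + x e2 * x e3 - th setT by lra.
ring.
Qed.

Lemma V_diff f x t t' : V f x t - V f x t' = (t - t') *
  (f setT + f [set e1] + f [set e2] + f [set e3] - f set0
   - f [set e1; e2] - f [set e1; e3] - f [set e2; e3]).
Proof. rewrite /V; ring. Qed.

Lemma cyl x t (T : {set 'I_3}) : T != set0 -> T != setT ->
  \sum_(S : {set 'I_3} | T \subset S) thx x t S = \prod_(i in T) x i.
Proof.
move: (sets3_all T); rewrite /sets3 !inE.
do ![case/orP => [/eqP->|] | move/eqP->]; rewrite ?eqxx // => _ _;
  rewrite big_mkcond sum3 prod3 /= setT3 ?subUset ?sub1set /thx /thf !inE !eE /=; ring.
Qed.

Lemma cylT x t :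
  \sum_(S : {set 'I_3} | setT \subset S) thx x t S = t.
Proof.
rewrite big_mkcond sum3 /= setT3 ?subUset ?sub1set /thx /thf !inE !eE /=; ring.
Qed.

Lemma prodT x : \prod_(i in [set: 'I_3]) x i = x e1 * x e2 * x e3.
Proof. by rewrite prod3 !inE. Qed.
End S.
Arguments U0 {R}.
Arguments thx {R}.
Arguments thf {R}.
Arguments V {R}.

Theorem mainTheorem8 (R : realType) (f : {set 'I_3} -> R) (x : 'I_3 -> R) :
  in_F f ->
  (forall i, 0 <= x i <= 1) ->
  (f [set e1; e2] + f [set e1; e3] + f [set e2; e3]
     >= 1 + f [set e1] + f [set e2] + f [set e3] ->
   exists theta : {set 'I_3} -> R,
     [/\ lp_optimal f x theta, theta setT <= x e1 * x e2 * x e3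
       & neg_cylinder_dep x theta]) /\
  (~ (f [set e1; e2] + f [set e1; e3] + f [set e2; e3]
       >= 1 + f [set e1] + f [set e2] + f [set e3]) ->
   exists theta : {set 'I_3} -> R,
     [/\ lp_optimal f x theta, theta setT >= x e1 * x e2 * x e3
       & pos_cylinder_dep x theta]).
Proof.
move=> [f0 fmono fsub fE0 fET] hx.
case/andP: (hx e1) => a1 b1; case/andP: (hx e2) => a2 b2; case/andP: (hx e3) => a3 b3.
have n1 : 0 <= 1 - x e1 by rewrite subr_ge0.
have n2 : 0 <= 1 - x e2 by rewrite subr_ge0.
have n3 : 0 <= 1 - x e3 by rewrite subr_ge0.
have hp0 : 0 <= x e1 * x e2 * x e3 by rewrite !mulr_ge0.
have hL1 : x e1 * x e2 + x e1 * x e3 - x e1 <= x e1 * x e2 * x e3.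
  have := mulr_ge0 (mulr_ge0 a1 n2) n3; lra.
have hL2 : x e1 * x e2 + x e2 * x e3 - x e2 <= x e1 * x e2 * x e3.
  have := mulr_ge0 (mulr_ge0 a2 n1) n3; lra.
have hL3 : x e1 * x e3 + x e2 * x e3 - x e3 <= x e1 * x e2 * x e3.
  have := mulr_ge0 (mulr_ge0 a3 n1) n2; lra.
have hU12 : x e1 * x e2 * x e3 <= x e1 * x e2.
  have := mulr_ge0 (mulr_ge0 a1 a2) n3; lra.
have hU13 : x e1 * x e2 * x e3 <= x e1 * x e3.
  have := mulr_ge0 (mulr_ge0 a1 a3) n2; lra.
have hU23 : x e1 * x e2 * x e3 <= x e2 * x e3.
  have := mulr_ge0 (mulr_ge0 a2 a3) n1; lra.
have hU0 : x e1 * x e2 * x e3 <= U0 x.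
  have := mulr_ge0 (mulr_ge0 n1 n2) n3; rewrite /U0; lra.
split=> H.
- pose t := Num.max 0 (Num.max (x e1 * x e2 + x e1 * x e3 - x e1)
     (Num.max (x e1 * x e2 + x e2 * x e3 - x e2) (x e1 * x e3 + x e2 * x e3 - x e3))).
  have htp : t <= x e1 * x e2 * x e3 by rewrite /t !ge_max hp0 hL1 hL2 hL3.
  have ht0 : 0 <= t by rewrite /t !le_max lexx.
  have ht1 : x e1 * x e2 + x e1 * x e3 - x e1 <= t by rewrite /t !le_max lexx ?orbT.
  have ht2 : x e1 * x e2 + x e2 * x e3 - x e2 <= t by rewrite /t !le_max lexx ?orbT.
  have ht3 : x e1 * x e3 + x e2 * x e3 - x e3 <= t by rewrite /t !le_max lexx ?orbT.
  exists (thx x t); split; last first.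
  + move=> T T0; case: (eqVneq T setT) => [->|hT]; first by rewrite cylT prodT.
    by rewrite cyl.
  + by rewrite thx_setT.
  have hF : lp_feasible x (thx x t) by apply: thx_feas => //; lra.
  split=> // th' hth'.
  rewrite (@feas_value _ f _ _ hF) (@feas_value _ f _ _ hth') thx_setT -subr_ge0 V_diff.
  case: (@feas_bounds _ _ _ hth') => b0 b1' b2' b3' _.
  have tt : t <= th' setT by rewrite /t !ge_max b0 b1' b2' b3'.
  apply: mulr_le0; lra.
- have H' : 1 + f [set e1] + f [set e2] + f [set e3] >
            f [set e1; e2] + f [set e1; e3] + f [set e2; e3].
    by rewrite ltNge; apply/negP.
  pose t := Num.min (U0 x) (Num.min (x e1 * x e2) (Num.min (x e1 * x e3) (x e2 * x e3))).
  have htp : x e1 * x e2 * x e3 <= t by rewrite /t !le_min hU0 hU12 hU13 hU23.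
  have ht0 : t <= U0 x by rewrite /t !ge_min lexx.
  have ht1 : t <= x e1 * x e2 by rewrite /t !ge_min lexx ?orbT.
  have ht2 : t <= x e1 * x e3 by rewrite /t !ge_min lexx ?orbT.
  have ht3 : t <= x e2 * x e3 by rewrite /t !ge_min lexx ?orbT.
  exists (thx x t); split; last first.
  + move=> T T0; case: (eqVneq T setT) => [->|hT]; first by rewrite cylT prodT.
    by rewrite cyl.
  + by rewrite thx_setT.
  have hF : lp_feasible x (thx x t) by apply: thx_feas => //; lra.
  split=> // th' hth'.
  rewrite (@feas_value _ f _ _ hF) (@feas_value _ f _ _ hth') thx_setT -subr_ge0 V_diff.
  case: (@feas_bounds _ _ _ hth') => _ _ _ _ [c1 c2 c3 c4].
  have tt : th' setT <= t by rewrite /t !le_min c1 c2 c3 c4.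
  apply: mulr_ge0; lra.
Qed.
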